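(* Fix real $R_1,R_2\ge1$. For $Y>0$ let $\mathcal{D}_Y(N,R_1,R_2)=\bigcup_{\ell>Y}\mathcal{C}'_\ell(N,R_1,R_2)$, the union over primes $\ell>Y$. Then \[ \frac{\#\mathcal{D}_Y(N,R_1,R_2)}{N}=O\Big(\sum_{\ell>Y}\ell^{-4/3}+\frac{1}{\log N}\Big) \] for $N\ge 2$, with implied constant depending only on $R_1,R_2$.
   Context: $\mathcal{R}_{\mathbb{Z}^3}(N,R_1,R_2)=\{(a,b,c)\in\mathbb{Z}_{\ge1}^3:\ ab^{2/3}c<N,\ a/c\in[1,R_1],\ b\in[1,R_2]\}$. A triple $(a,b,c)$ of positive integers is $\ell$-carefree if $\ell^2\nmid ab$, $\ell^2\nmid bc$ and $\ell^2\nmid ca$. $\mathcal{C}'_\ell(N,R_1,R_2)$ is the set of triples in $\mathcal{R}_{\mathbb{Z}^3}(N,R_1,R_2)$ that are not $\ell$-carefree. Sums over $\ell$ are over primes. *)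

(* Defs.v *)
From HB Require Import structures.
From mathcomp Require Import all_boot all_order all_algebra.
From mathcomp Require Import all_classical all_reals all_analysis.
From mathcomp Require Import finmap.
Set Implicit Arguments. Unset Strict Implicit. Unset Printing Implicit Defensive.
Import Order.TTheory GRing.Theory Num.Theory numFieldNormedType.Exports.
Local Open Scope classical_set_scope.
Local Open Scope ring_scope.

Section Defs.
Variable R : realType.

Definition regionZ3 (N R1 R2 : R) : set (nat * nat * nat) :=
  [set t | let: (a, b, c) := t in
     [/\ (1 <= a)%N /\ (1 <= b)%N /\ (1 <= c)%N,
         a%:R * (b%:R `^ (2/3 : R)) * c%:R < N,
         (1 <= a%:R / c%:R :> R) /\ (a%:R / c%:R <= R1) &
         (1 <= b%:R :> R) /\ (b%:R <= R2)]].

Definition carefree (l a b c : nat) : bool :=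
  [&& ~~ (l ^ 2 %| a * b)%N, ~~ (l ^ 2 %| b * c)%N & ~~ (l ^ 2 %| c * a)%N].

Definition Cprime (l : nat) (N R1 R2 : R) : set (nat * nat * nat) :=
  [set t | regionZ3 N R1 R2 t /\ ~~ carefree l t.1.1 t.1.2 t.2].

Definition DY (Y N R1 R2 : R) : set (nat * nat * nat) :=
  \bigcup_(l in [set l : nat | prime l /\ Y < l%:R]) Cprime l N R1 R2.

Definition card3 (A : set (nat * nat * nat)) : nat := #|` fset_set A|.

Definition primeTail (Y : R) : R :=
  limn (series (fun n : nat =>
    if prime n && (Y < n%:R) then n%:R `^ (- (4/3) : R) else 0)).

End Defs.

(* Main.v *)
Require Import Defs.
From HB Require Import structures.
From mathcomp Require Import all_boot all_order all_algebra.
From mathcomp Require Import all_classical all_reals all_analysis.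
From mathcomp Require Import finmap zify ring lra.
Import Order.TTheory GRing.Theory Num.Theory.
Local Open Scope ring_scope.

Section Counting.
Local Open Scope classical_set_scope.
Let T := (nat * nat * nat)%type.

Lemma card3_inj (A : set T) (n : nat) (f : T -> nat) :
  (forall x, A x -> (f x < n)%N) ->
  (forall x y, A x -> A y -> f x = f y -> x = y) ->
  finite_set A /\ (card3 A <= n)%N.
Proof.
move=> fn finj.
have H : (A #<= `I_n)%card.
  have : $|{injfun A >-> `I_n}|.
    by apply/injfunPex; exists f => // x y /set_mem Ax /set_mem Ay; apply: finj.
  by case=> g; apply: inj_card_le g.
split; first by apply/finite_set_leP; exists n.
exact: geq_card_fset_set.
Qed.

Lemma card3_sub (A B : set T) : A `<=` B -> finite_set B ->
  finite_set A /\ (card3 A <= card3 B)%N.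
Proof.
move=> AB fB; have fA := sub_finite_set AB fB; split => //.
by apply: fsubset_leq_card; rewrite -fset_set_sub.
Qed.

Lemma card3_U (A B : set T) : finite_set A -> finite_set B ->
  finite_set (A `|` B) /\ (card3 (A `|` B) <= card3 A + card3 B)%N.
Proof.
move=> fA fB; split; first by rewrite finite_setU.
by rewrite /card3 fset_setU //; apply: (leq_card_fsetU _ _).1.
Qed.

Lemma card3_0 : card3 (set0 : set T) = 0%N.
Proof. by rewrite /card3 fset_set0. Qed.

Lemma card3_union (F : nat -> set T) (P : pred nat) (M : nat) :
  (forall l, finite_set (F l)) ->
  finite_set (fun x => exists l, [/\ (l < M)%N, P l & F l x]) /\
  (card3 (fun x => exists l, [/\ (l < M)%N, P l & F l x]) <=
    \sum_(l < M) (if P l then card3 (F l) else 0))%N.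
Proof.
move=> fF; elim: M => [|M [IHf IHc]].
  have -> : (fun x => exists l, [/\ (l < 0)%N, P l & F l x]) = set0.
    by apply/seteqP; split => x //= [l []].
  by rewrite card3_0 big_ord0; split => //; exact: finite_set0.
set U := fun x => _.
set U0 := fun x => _ in IHf IHc.
set G := if P M then F M else set0.
have fG : finite_set G by rewrite /G; case: (P M) => //; exact: finite_set0.
have sub : U `<=` U0 `|` G.
  move=> x [l [lM Pl Fl]]; rewrite ltnS leq_eqVlt in lM.
  case/orP: lM => [/eqP El | lM]; last by left; exists l.
  by right; rewrite /G -El Pl.
have [fU cU] := @card3_U _ _ IHf fG.
have [fU' cU'] := @card3_sub _ _ sub fU.
split => //; rewrite big_ord_recr /=.
apply: (leq_trans cU'); apply: (leq_trans cU); apply: leq_add => //.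
by rewrite /G; case: (P M) => //; rewrite card3_0.
Qed.

End Counting.
Section Enc.
Local Open Scope nat_scope.
Lemma enc2 (n x x' y y' : nat) : (x < n)%N -> (x' < n)%N ->
  x + n * y = x' + n * y' -> x = x' /\ y = y'.
Proof.
move=> hx hx' E.
have ex : (x + n * y) %% n = x by rewrite addnC mulnC modnMDl modn_small.
have ex' : (x' + n * y') %% n = x' by rewrite addnC mulnC modnMDl modn_small.
have xx : x = x' by rewrite -ex -ex' E.
split => //; subst x'.
have n0 : (0 < n)%N by apply: leq_ltn_trans hx.
by move/addnI: E => /eqP; rewrite eqn_mul2l gtn_eqF //= => /eqP.
Qed.

Lemma enc3 (n1 n2 x x' y y' z z' : nat) : (x < n1)%N -> (x' < n1)%N ->
  (y < n2)%N -> (y' < n2)%N ->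
  x + n1 * (y + n2 * z) = x' + n1 * (y' + n2 * z') -> [/\ x = x', y = y' & z = z'].
Proof.
move=> hx hx' hy hy' /(enc2 _ _ _ _ _ hx hx') [-> /(enc2 _ _ _ _ _ hy hy') [-> ->]] //.
Qed.

Lemma enc3_lt (n1 n2 n3 x y z : nat) : (x < n1)%N -> (y < n2)%N -> (z < n3)%N ->
  (x + n1 * (y + n2 * z) < n1 * n2 * n3)%N.
Proof.
move=> hx hy hz.
have h1 : (x + n1 * (y + n2 * z) < n1 * (y + n2 * z).+1)%N.
  by rewrite mulnS ltn_add2r.
apply: (leq_trans h1); rewrite -mulnA leq_mul2l; apply/orP; right.
have h2 : ((y + n2 * z).+1 <= n2 * z.+1)%N by rewrite mulnS -addSn leq_add2r.
by apply: (leq_trans h2); rewrite leq_mul2l hz orbT.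
Qed.

End Enc.

Section Box.
Variable R : realType.
Local Open Scope classical_set_scope.

Definition idx (m x : nat) := (x %/ m).-1.

Lemma idx_lt (m x : nat) (X : R) : (0 < m)%N -> (0 < x)%N -> (m %| x)%N ->
  x%:R <= X -> (idx m x < Num.truncn (X / m%:R))%N.
Proof.
move=> m0 x0 mx xX.
have q0 : (0 < x %/ m)%N by rewrite divn_gt0 // dvdn_leq.
have m0R : (0 : R) < m%:R by rewrite ltr0n.
rewrite /idx prednK // truncn_ge_nat; last first.
  by rewrite divr_ge0 // ?ler0n //; apply: le_trans xX; rewrite ler0n.
by rewrite ler_pdivlMr // -natrM divnK.
Qed.

Lemma idx_inj (m x y : nat) : (0 < m)%N -> (0 < x)%N -> (m %| x)%N ->
  (0 < y)%N -> (m %| y)%N -> idx m x = idx m y -> x = y.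
Proof.
move=> m0 x0 mx y0 my E.
have qx : (0 < x %/ m)%N by rewrite divn_gt0 // dvdn_leq.
have qy : (0 < y %/ m)%N by rewrite divn_gt0 // dvdn_leq.
have : (x %/ m = y %/ m)%N by rewrite -(prednK qx) -(prednK qy); congr _.+1.
by move=> E2; rewrite -(divnK mx) -(divnK my) E2.
Qed.

Arguments idx_lt {m x X}.
Arguments idx_inj {m x y}.
Arguments enc3 {n1 n2 x x' y y' z z'}.

Definition boxS (X Y Z : R) (m1 m2 m3 : nat) : set (nat * nat * nat) :=
  [set t | let: (a, b, c) := t in
    [/\ [/\ (0 < a)%N, (0 < b)%N & (0 < c)%N],
        [/\ (m1 %| a)%N, (m2 %| b)%N & (m3 %| c)%N] &
        [/\ a%:R <= X, b%:R <= Y & c%:R <= Z]]].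

Lemma box_count (X Y Z : R) (m1 m2 m3 : nat) : 0 <= X -> 0 <= Y -> 0 <= Z ->
  (0 < m1)%N -> (0 < m2)%N -> (0 < m3)%N ->
  finite_set (boxS X Y Z m1 m2 m3) /\
  (card3 (boxS X Y Z m1 m2 m3))%:R <= X * Y * Z / (m1 * m2 * m3)%:R.
Proof.
move=> X0 Y0 Z0 m10 m20 m30.
set n1 := Num.truncn (X / m1%:R).
set n2 := Num.truncn (Y / m2%:R).
set n3 := Num.truncn (Z / m3%:R).
pose f (t : nat * nat * nat) := let: (a, b, c) := t in
  idx m1 a + n1 * (idx m2 b + n2 * idx m3 c).
have [fin cd] : finite_set (boxS X Y Z m1 m2 m3) /\
    (card3 (boxS X Y Z m1 m2 m3) <= n1 * n2 * n3)%N.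
  apply: (@card3_inj _ _ f).
    move=> [[a b] c] [[a0 b0 c0] [ma mb mc] [aX bY cZ]] /=.
    by apply: enc3_lt; apply: idx_lt.
  move=> [[a b] c] [[a' b'] c'] [[a0 b0 c0] [ma mb mc] [aX bY cZ]]
    [[a0' b0' c0'] [ma' mb' mc'] [aX' bY' cZ']] /= E.
  have [] := enc3 (idx_lt m10 a0 ma aX) (idx_lt m10 a0' ma' aX')
    (idx_lt m20 b0 mb bY) (idx_lt m20 b0' mb' bY') E.
  move=> /(idx_inj m10 a0 ma a0' ma') -> /(idx_inj m20 b0 mb b0' mb') ->.
  by move=> /(idx_inj m30 c0 mc c0' mc') ->.
split => //.
apply: (le_trans (y := (n1 * n2 * n3)%:R)); first by rewrite ler_nat.
have hn (W : R) (m : nat) : 0 <= W -> (0 < m)%N ->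
    (Num.truncn (W / m%:R))%:R <= W / m%:R.
  by move=> W0 m0; rewrite truncn_le divr_ge0 // ler0n.
rewrite !natrM [X * Y * Z / _]mulrC !invfM.
have e : (m1%:R^-1 * m2%:R^-1 * m3%:R^-1 * (X * Y * Z) : R) =
  (X / m1%:R) * (Y / m2%:R) * (Z / m3%:R) by rewrite mulrC; ring.
rewrite e.
apply: ler_pM; [ | by rewrite ler0n | | exact: hn].
- by apply: mulr_ge0; rewrite ler0n.
- by apply: ler_pM; rewrite ?ler0n //; exact: hn.
Qed.

End Box.
Arguments boxS {R}.
Arguments box_count {R}.

Section Region.
Variable R : realType.
Local Open Scope classical_set_scope.

Lemma region_bounds (N R1 R2 : R) (a b c : nat) : 1 <= R1 -> 0 < N ->
  regionZ3 N R1 R2 (a, b, c) ->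
  [/\ [/\ (0 < a)%N, (0 < b)%N & (0 < c)%N],
      a%:R <= Num.sqrt (R1 * N), b%:R <= R2 & c%:R <= Num.sqrt (R1 * N)].
Proof.
move=> R11 N0 [[a1 [b1 c1]] hN [h1 h2] [_ hb]].
have c0 : (0 : R) < c%:R by rewrite ltr0n.
have a0 : (0 : R) < a%:R by rewrite ltr0n.
have bp : 1 <= b%:R `^ (2/3 : R).
  rewrite -[X in X <= _](powRr0 (b%:R : R)); apply: ler_powR; first by rewrite ler1n.
  by rewrite divr_ge0.
have ac : a%:R * c%:R < N.
  apply: le_lt_trans hN; rewrite -mulrA ler_pM2l // ler_peMl //; exact: ltW.
have ca : (c%:R : R) <= a%:R by rewrite ler_pdivlMr // mul1r in h1.
have aR : (a%:R : R) <= R1 * c%:R by rewrite ler_pdivrMr // in h2.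
have sq (x : R) : 0 <= x -> x ^+ 2 <= R1 * N -> x <= Num.sqrt (R1 * N).
  move=> x0 hx; rewrite -(ger0_norm x0) -sqrtr_sqr; exact: ler_wsqrtr.
have RN : N <= R1 * N by rewrite ler_peMl // ltW.
split => //.
- apply: sq; first exact: ltW.
  rewrite expr2; apply: (le_trans (y := R1 * c%:R * a%:R)).
    by rewrite ler_pM2r.
  by rewrite -mulrA [c%:R * _]mulrC ler_pM2l ?(lt_le_trans ltr01) // ltW.
- apply: sq; first exact: ltW.
  rewrite expr2; apply: le_trans RN; apply: ltW; apply: le_lt_trans ac.
  by rewrite ler_pM2r.
Qed.

End Region.
Arguments region_bounds {R N R1 R2 a b c}.

Section PerPrime.
Local Open Scope nat_scope.
Lemma dvd_sq_mul l x y : prime l -> l ^ 2 %| x * y ->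
  [|| l ^ 2 %| x, l ^ 2 %| y | (l %| x) && (l %| y)].
Proof.
move=> pl h; case: (boolP (l %| x)) => lx; case: (boolP (l %| y)) => ly.
- by rewrite orbT orbT.
- have cp : coprime (l ^ 2) y by apply: coprimeXl; rewrite prime_coprime.
  by move: h; rewrite (Gauss_dvdl _ cp) => ->.
- have cp : coprime (l ^ 2) x by apply: coprimeXl; rewrite prime_coprime.
  by move: h; rewrite (Gauss_dvdr _ cp) => ->; rewrite orbT.
- have cp : coprime (l ^ 2) x by apply: coprimeXl; rewrite prime_coprime.
  by move: h; rewrite (Gauss_dvdr _ cp) => ->; rewrite orbT.
Qed.

Lemma dvdl_sq l x : l ^ 2 %| x -> l %| x.
Proof. by apply: dvdn_trans; rewrite dvdn_exp. Qed.

Definition mtriple (l i : nat) : nat * nat * nat :=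
  match i with
  | 0 => (l ^ 2, 1, 1) | 1 => (1, l ^ 2, 1) | 2 => (1, 1, l ^ 2)
  | 3 => (l, l, 1) | 4 => (1, l, l) | _ => (l, 1, l) end.
End PerPrime.
Arguments dvd_sq_mul {l x y}.

Section PerPrimeR.
Variable R : realType.
Local Open Scope classical_set_scope.

Definition Fbox (X R2 : R) l i : set (nat * nat * nat) :=
  let: (m1, m2, m3) := mtriple l i in boxS X R2 X m1 m2 m3.

Lemma Cprime_cover (l : nat) (N R1 R2 : R) t : prime l -> 1 <= R1 -> 0 < N ->
  Cprime l N R1 R2 t ->
  exists i, [/\ (i < 6)%N, xpredT i & Fbox (Num.sqrt (R1 * N)) R2 l i t].
Proof.
move: t => [[a b] c] pl R11 N0 [reg].
have [[a0 b0 c0] aX bR cX] := region_bounds R11 N0 reg.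
rewrite /carefree /= !negb_and !negbK.
have B m1 m2 m3 : (m1 %| a)%N -> (m2 %| b)%N -> (m3 %| c)%N ->
   boxS (Num.sqrt (R1 * N)) R2 (Num.sqrt (R1 * N)) m1 m2 m3 (a, b, c).
  by move=> *; split.
case/or3P => /(dvd_sq_mul pl) /or3P [h|h|/andP[h1 h2]].
- by exists 0%N; split => //; apply: B.
- by exists 1%N; split => //; apply: B.
- by exists 3%N; split => //; apply: B.
- by exists 1%N; split => //; apply: B.
- by exists 2%N; split => //; apply: B.
- by exists 4%N; split => //; apply: B.
- by exists 2%N; split => //; apply: B.
- by exists 0%N; split => //; apply: B.
- by exists 5%N; split => //; apply: B.
Qed.

Lemma Cprime_l_le (l : nat) (N R1 R2 : R) t : prime l -> 1 <= R1 -> 0 < N ->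
  Cprime l N R1 R2 t -> l%:R <= Num.sqrt (R1 * N) + R2.
Proof.
move: t => [[a b] c] pl R11 N0 [reg nc].
have [[a0 b0 c0] aX bR cX] := region_bounds R11 N0 reg.
have X0 : 0 <= Num.sqrt (R1 * N) by apply: sqrtr_ge0.
have R20 : 0 <= R2 by apply: le_trans bR; rewrite ler0n.
have lx (x : nat) (W : R) : (0 < x)%N -> (l %| x)%N -> x%:R <= W ->
    W <= Num.sqrt (R1 * N) + R2 -> l%:R <= Num.sqrt (R1 * N) + R2.
  move=> x0 hx xW WS.
  have h : (l%:R : R) <= x%:R by rewrite ler_nat dvdn_leq.
  exact: (le_trans h (le_trans xW WS)).
have XS : Num.sqrt (R1 * N) <= Num.sqrt (R1 * N) + R2 by rewrite lerDl.
have RS : R2 <= Num.sqrt (R1 * N) + R2 by rewrite lerDr.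
move: nc; rewrite /carefree /= !negb_and !negbK.
case/or3P => /(dvd_sq_mul pl) /or3P [/dvdl_sq h|/dvdl_sq h|/andP[h _]].
- exact: (lx _ _ a0 h aX XS).
- exact: (lx _ _ b0 h bR RS).
- exact: (lx _ _ a0 h aX XS).
- exact: (lx _ _ b0 h bR RS).
- exact: (lx _ _ c0 h cX XS).
- exact: (lx _ _ b0 h bR RS).
- exact: (lx _ _ c0 h cX XS).
- exact: (lx _ _ a0 h aX XS).
- exact: (lx _ _ c0 h cX XS).
Qed.

Lemma Cprime_card (l : nat) (N R1 R2 : R) : prime l -> 1 <= R1 -> 0 < N ->
  1 <= R2 ->
  finite_set (Cprime l N R1 R2) /\
  (card3 (Cprime l N R1 R2))%:R <= (R1 * N * R2 / (l ^ 2)%:R) *+ 6.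
Proof.
move=> pl R11 N0 R21.
set X := Num.sqrt (R1 * N).
have X0 : 0 <= X by apply: sqrtr_ge0.
have R20 : 0 <= R2 by apply: le_trans R21.
have l0 : (0 < l)%N by apply: prime_gt0.
have l20 : (0 < l ^ 2)%N by rewrite expn_gt0 l0.
have XX : X * R2 * X = R1 * N * R2.
  have RN0 : 0 <= R1 * N.
    by apply: mulr_ge0; [exact: le_trans ler01 R11 | exact: ltW].
  by rewrite mulrC mulrA -expr2 sqr_sqrtr.
have G m1 m2 m3 : (0 < m1)%N -> (0 < m2)%N -> (0 < m3)%N ->
    (m1 * m2 * m3 = l ^ 2)%N ->
    finite_set (boxS X R2 X m1 m2 m3) /\
    (card3 (boxS X R2 X m1 m2 m3))%:R <= R1 * N * R2 / (l ^ 2)%:R.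
  move=> h1 h2 h3 E.
  have := box_count X R2 X m1 m2 m3 X0 R20 X0 h1 h2 h3.
  by rewrite E XX.
have fF i : finite_set (Fbox X R2 l i) /\
    (card3 (Fbox X R2 l i))%:R <= R1 * N * R2 / (l ^ 2)%:R.
  rewrite /Fbox; case: i => [|[|[|[|[|i]]]]] /=; apply: G => //;
    by rewrite ?muln1 ?mul1n // expn2.
have [fU cU] := card3_union (Fbox X R2 l) xpredT 6 (fun i => (fF i).1).
have sub : Cprime l N R1 R2 `<=` (fun x => exists i, [/\ (i < 6)%N, xpredT i & Fbox X R2 l i x]).
  by move=> t; apply: Cprime_cover.
have [fC cC] := card3_sub _ _ sub fU.
split => //.
apply: (le_trans (y := (\sum_(i < 6) card3 (Fbox X R2 l i))%:R)).
  by rewrite ler_nat; apply: (leq_trans cC); apply: (leq_trans cU).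
rewrite natr_sum; apply: (le_trans (y := \sum_(i < 6) (R1 * N * R2 / (l ^ 2)%:R))).
  by apply: ler_sum => i _; exact: (fF i).2.
by rewrite sumr_const card_ord.
Qed.

End PerPrimeR.
Arguments Cprime_card {R l N R1 R2}.
Arguments Cprime_l_le {R l N R1 R2 t}.
Section Series.
Variable R : realType.

Lemma tele_alg (x y : R) : 0 < x -> 0 < y -> x ^+ 3 = y ^+ 3 + 1 ->
  (x ^+ 4)^-1 <= 3 * (y^-1 - x^-1).
Proof.
move=> x0 y0 E.
have yx : y <= x.
  rewrite leNgt; apply/negP => xy.
  have h1 : x * x < y * y by nra.
  have h2 : x * x * x < y * y * y by nra.
  have : x ^+ 3 < y ^+ 3 by rewrite !exprS expr0 !mulr1 mulrA mulrA.
  by rewrite E; lra.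
have key : 1 <= 3 * (x - y) * x ^+ 2.
  have e1 : (x - y) * (x ^+ 2 + x * y + y ^+ 2) = 1.
    have -> : (x - y) * (x ^+ 2 + x * y + y ^+ 2) = x ^+ 3 - y ^+ 3 by ring.
    rewrite E; ring.
  rewrite -[X in X <= _]e1.
  have h3 : x ^+ 2 + x * y + y ^+ 2 <= 3 * x ^+ 2.
    rewrite !expr2; nra.
  have h4 : 0 <= x - y by lra.
  have h5 := ler_wpM2l h4 h3.
  by move: h5; rewrite mulrCA mulrA.
have e : 3 * (y^-1 - x^-1) = 3 * (x - y) / (x * y).
  by field; rewrite ?gt_eqF.
rewrite e ler_pdivlMr ?mulr_gt0 //.
have e2 : (x ^+ 4)^-1 * (x * y) = y / x ^+ 3.
  by field; rewrite ?gt_eqF // ?exprn_gt0.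
rewrite e2 ler_pdivrMr ?exprn_gt0 //.
have : x <= 3 * (x - y) * x ^+ 3.
  have -> : 3 * (x - y) * x ^+ 3 = (3 * (x - y) * x ^+ 2) * x by ring.
  by rewrite ler_peMl // ltW.
lra.
Qed.
Lemma pow13_cube (a : R) : 0 <= a -> (a `^ (1/3)) ^+ 3 = a.
Proof.
move=> a0; rewrite -powR_mulrn ?powR_ge0 // -powRrM.
have -> : (1/3 * 3%:R : R) = 1 by field.
by rewrite powRr1.
Qed.

Lemma pow43 (a : R) : 0 <= a -> a `^ (- (4/3)) = ((a `^ (1/3)) ^+ 4)^-1.
Proof.
move=> a0; rewrite powRN -powR_mulrn ?powR_ge0 // -powRrM.
by have -> : (1/3 * 4%:R : R) = 4/3 by field.
Qed.

Lemma tele (n : nat) : (1 <= n)%N ->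
  (n.+1)%:R `^ (- (4/3)) <= 3 * (n%:R `^ (- (1/3)) - (n.+1)%:R `^ (- (1/3)) : R).
Proof.
move=> n1.
rewrite pow43 ?ler0n // !powRN.
apply: tele_alg; try apply: powR_gt0; rewrite ?ltr0n //.
rewrite !pow13_cube ?ler0n // -natr1 //.
Qed.

Definition uY (Y : R) (n : nat) : R :=
  if prime n && (Y < n%:R) then n%:R `^ (- (4/3) : R) else 0.

Lemma uY_ge0 Y n : 0 <= uY Y n.
Proof. by rewrite /uY; case: ifP => // _; apply: powR_ge0. Qed.

Lemma uY_le Y n : (2 <= n)%N -> uY Y n <= n%:R `^ (- (4/3) : R).
Proof. by move=> _; rewrite /uY; case: ifP => // _; apply: powR_ge0. Qed.

Lemma uY_small Y n : (n < 2)%N -> uY Y n = 0.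
Proof.
by rewrite /uY; case: n => [|[|n]] //= _; case: ifP => //.
Qed.

Lemma series_nd Y : {homo series (uY Y) : n m / (n <= m)%N >-> n <= m}.
Proof.
apply/nondecreasing_seqP => n; rewrite seriesSr lerDl; exact: uY_ge0.
Qed.

Lemma series_bd Y n : series (uY Y) n.+2 <= 3 - 3 * (n.+1)%:R `^ (- (1/3) : R).
Proof.
elim: n => [|n IH].
  rewrite /series /= !big_nat_recr //= big_geq // !uY_small // powR1; lra.
rewrite seriesSr.
have h1 := uY_le Y n.+2 isT.
have h2 := tele n.+1 isT.
lra.
Qed.

Lemma series_le3 Y n : series (uY Y) n <= 3.
Proof.
have h : (n <= n.+2)%N by rewrite leqW.
apply: (le_trans (series_nd Y n n.+2 h)); apply: (le_trans (series_bd Y n)).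
rewrite lerBlDr lerDl; apply: mulr_ge0 => //; exact: powR_ge0.
Qed.

Lemma series_le_tail Y M : series (uY Y) M <= primeTail Y.
Proof.
apply: (nondecreasing_cvgn_le (series_nd Y)).
apply: nondecreasing_is_cvgn; first exact: series_nd.
by exists 3 => _ [n _ <-]; apply: series_le3.
Qed.


End Series.
Arguments uY {R}.
Arguments series_le_tail {R}.

Section Final.
Variable R : realType.
Local Open Scope classical_set_scope.

Lemma inv_sq_le (l : nat) : (1 <= l)%N -> ((l ^ 2)%:R)^-1 <= l%:R `^ (- (4/3) : R).
Proof.
move=> l1.
have l0 : (0 : R) < l%:R by rewrite ltr0n.
rewrite powRN lef_pV2 ?posrE ?powR_gt0 ?ltr0n ?expn_gt0 ?l1 //.
rewrite natrX -powR_mulrn ?ler0n //; apply: ler_powR; first by rewrite ler1n.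
lra.
Qed.

End Final.
Arguments inv_sq_le {R l}.

Theorem mainTheorem9 (R : realType) (R1 R2 : R) (hR1 : 1 <= R1) (hR2 : 1 <= R2) :
  exists C : R, 0 < C /\
    forall Y N : R, 0 < Y -> 2 <= N ->
      (card3 (DY Y N R1 R2))%:R / N <= C * (primeTail Y + 1 / ln N).
Proof.
have R10 : 0 < R1 by apply: lt_le_trans hR1.
have R20 : 0 < R2 by apply: lt_le_trans hR2.
exists (6 * R1 * R2); split; first by rewrite !mulr_gt0.
move=> Y N Y0 N2.
have N0 : 0 < N by apply: lt_le_trans N2.
set X := Num.sqrt (R1 * N).
have X0 : 0 <= X by apply: sqrtr_ge0.
set M := (Num.truncn (X + R2)).+1.
pose P := fun l : nat => prime l && (Y < l%:R).
pose F := fun l : nat => if prime l then Cprime l N R1 R2 else set0.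
have fF l : finite_set (F l).
  rewrite /F; case: ifP => pl; last exact: finite_set0.
  by have [] := Cprime_card pl hR1 N0 hR2.
have [fU cU] := card3_union F P M fF.
have sub : (DY Y N R1 R2 `<=` (fun x => exists l, [/\ (l < M)%N, P l & F l x]))%classic.
  move=> x [l [pl Yl] Cx]; exists l; split.
  - rewrite ltnS truncn_ge_nat; last by rewrite addr_ge0 // ltW.
    exact: (Cprime_l_le pl hR1 N0 Cx).
  - by rewrite /P pl.
  - by rewrite /F pl.
have [_ cD] := card3_sub _ _ sub fU.
have step : (card3 (DY Y N R1 R2))%:R <=
    \sum_(l < M) (6 * R1 * R2 * N) * uY Y l.
  apply: (le_trans (y := (\sum_(l < M) (if P l then card3 (F l) else 0%N))%:R)).
    by rewrite ler_nat; apply: leq_trans cU.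
  rewrite natr_sum; apply: ler_sum => l _.
  rewrite /uY; rewrite /P; case: ifP => /=; last by rewrite mulr0.
  move=> /andP[pl Yl]; rewrite /F pl.
  have [_ h] := Cprime_card pl hR1 N0 hR2.
  apply: (le_trans h).
  have h2 := inv_sq_le (prime_gt0 pl).
  rewrite -mulr_natr.
  have -> : 6 * R1 * R2 * N * l%:R `^ (- (4 / 3)) =
      (R1 * N * R2) * l%:R `^ (- (4 / 3)) * 6%:R by ring.
  rewrite ler_pM2r ?ltr0n // ler_pM2l //.
  by rewrite !mulr_gt0.
rewrite -mulr_sumr in step.
have eS : \sum_(l < M) uY Y l = series (uY Y) M by rewrite seriesEord.
rewrite eS in step.
have hT := series_le_tail Y M.
have lnN : 0 < ln N by apply: ln_gt0; apply: lt_le_trans N2; lra.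
have C0 : 0 < 6 * R1 * R2 by rewrite !mulr_gt0.
rewrite ler_pdivrMr //.
apply: (le_trans step).
have -> : 6 * R1 * R2 * N * series (uY Y) M = (6 * R1 * R2 * series (uY Y) M) * N by ring.
rewrite ler_pM2r // ler_pM2l //.
apply: (le_trans hT); rewrite lerDl; apply: divr_ge0 => //; exact: ltW.
Qed.
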